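(* Let $C_{TS}>0$ be a fixed absolute constant and, for a problem instance, let $N_{TS}=C_{TS}\,\varepsilon_{TS}^{-2}\log(\delta_{TS}^{-1})$ where $\varepsilon_{TS}=\min_{i,j\in[K]}\mathbb E[(\mu_i-\mu_j)_+]$ and $\delta_{TS}=\min_{i\in[K]}\Pr[A^*=i]$. Let $\mathcal C$ be a fixed finite collection of priors on $[0,1]$ such that every problem instance (with any number of arms) whose priors all belong to $\mathcal C$ satisfies pairwise non-dominance. Then there is a constant $c_{\mathcal C}$ depending only on $\mathcal C$ (and $C_{TS}$) such that for every $K$ and every $K$-armed problem instance with all priors $\mathcal P_i\in\mathcal C$, $N_{TS}\leq c_{\mathcal C}\,K$.
   Context: A problem instance consists of $K$ arms with mean rewards $\mu_1,\dots,\mu_K\in[0,1]$ drawn independently, $\mu_i\sim\mathcal P_i$. $A^*=\min(\arg\max_j\mu_j)$. $(x)_+=\max(x,0)$. Pairwise non-dominance: for all arms $i\neq j$, $\Pr[\mu_j<\mathbb E[\mu_i]]>0$. *)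

(* Defs.v *)
From HB Require Import structures.
From mathcomp Require Import all_boot all_order all_algebra.
From mathcomp Require Import all_classical all_reals all_analysis.
Set Implicit Arguments. Unset Strict Implicit. Unset Printing Implicit Defensive.
Import Order.TTheory GRing.Theory Num.Theory.
Local Open Scope classical_set_scope.
Local Open Scope ring_scope.

Section Defs.
Variable R : realType.

Definition prior_on_01 (p : probability R R) : Prop := p `[0%R, 1%R]%classic = 1%E.

Definition prior_mean (p : probability R R) : \bar R := (\int[p]_x (x%:E))%E.

Definition pairwise_nondominance (K : nat) (p : 'I_K -> probability R R) : Prop :=
  forall i j : 'I_K, i != j -> (0 < p j [set x | (x%:E < prior_mean (p i))%E])%E.

Definition mutually_independent d (T : measurableType d) (P : probability T R)
  (K : nat) (mu : 'I_K -> T -> R) : Prop :=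
  forall A : 'I_K -> set R, (forall i, measurable (A i)) ->
    P [set t | forall i, A i (mu i t)] = (\prod_(i < K) P (mu i @^-1` A i))%E.

Definition has_law d (T : measurableType d) (P : probability T R)
  (X : T -> R) (q : probability R R) : Prop :=
  forall A : set R, measurable A -> P (X @^-1` A) = q A.

(* i = A^* = min (argmax_j v j). *)
Definition is_Astar (K : nat) (v : 'I_K -> R) (i : 'I_K) : Prop :=
  (forall j, v j <= v i) /\ (forall j : 'I_K, (j < i)%N -> v j < v i).

Definition eps_TS d (T : measurableType d) (P : probability T R)
  (K : nat) (mu : 'I_K -> T -> R) : R :=
  fine (\big[Order.min/+oo%E]_(i < K) \big[Order.min/+oo%E]_(j < K | j != i)
          (\int[P]_t ((Num.max (mu i t - mu j t) 0)%:E))%E).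

Definition delta_TS d (T : measurableType d) (P : probability T R)
  (K : nat) (mu : 'I_K -> T -> R) : R :=
  fine (\big[Order.min/+oo%E]_(i < K) P [set t | is_Astar (fun j => mu j t) i]).

Definition N_TS (C_TS : R) d (T : measurableType d) (P : probability T R)
  (K : nat) (mu : 'I_K -> T -> R) : R :=
  C_TS * (eps_TS P mu) ^- 2 * ln ((delta_TS P mu)^-1).

End Defs.

(* Main.v *)
Require Import Defs.
From HB Require Import structures.
From mathcomp Require Import all_boot all_order all_algebra.
From mathcomp Require Import all_classical all_reals all_analysis.
From mathcomp Require Import measurable_realfun lra.
Import Order.TTheory GRing.Theory Num.Theory.
Local Open Scope classical_set_scope.
Local Open Scope ring_scope.

Lemma mean_le (R : realType) (q : probability R R) (D : set R) (s : R) :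
  measurable D -> q D = 1%E -> (forall x, D x -> 0 <= x <= s) ->
  (prior_mean q <= s%:E)%E.
Proof.
move=> mD qD1 hD.
have nD : q (~` D) = 0%E by rewrite probability_setC // qD1 subee.
rewrite /prior_mean (ae_eq_integral ((fun x : R => x%:E) \_ D)) //; last first.
- exists (~` D); split => //; first exact: measurableC.
  move=> x /= hx Dx; apply: hx => _; by rewrite patchE mem_set.
- have -> : (fun x : R => x%:E) \_ D = (fun x => (x * \1_D x)%:E).
    by apply/funext => x; rewrite patchE indicE; case: (x \in D) => /=; rewrite ?mulr1 ?mulr0.
  apply/measurable_realfun.measurable_EFinP.
  apply: measurable_funM => //; exact: measurable_indic.
rewrite -integral_mkcond.
apply: (@le_trans _ _ (\int[q]_(x in D) (cst s%:E x))%E).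
  apply: ge0_le_integral => //.
  - by move=> x /hD /andP[h1 h2]; rewrite lee_fin.
  - by move=> x /hD /andP[h1 h2]; rewrite /= lee_fin.
rewrite integral_cst //.
have -> : (s%:E * q D)%E = s%:E by rewrite -[RHS]mule1; congr (_ * _)%E.
done.
Qed.

Lemma exists_r (R : realType) (q : probability R R) (m : R) :
  (0 < q `]-oo, m[%classic)%E -> exists r, r < m /\ (0 < q `]-oo, r]%classic)%E.
Proof.
move=> hq; apply: contrapT => hn.
have h0 : forall r, r < m -> q `]-oo, r]%classic = 0%E.
  move=> r rm; apply/eqP; rewrite eq_le measure_ge0 andbT leNgt.
  by apply/negP => h; apply: hn; exists r.
have : (q `]-oo, m[%classic <= \sum_(0 <= n <oo) q `]-oo, (m - n.+1%:R^-1)%R]%classic)%E.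
  apply: measure_sigma_subadditive => //.
  move=> x /=; rewrite in_itv /= => xm.
  have [k hk] := ltr_add_invr xm.
  exists k => //=; rewrite in_itv /=; rewrite lerBrDr; exact: ltW.
rewrite eseries0 => [|i _ _]; last first.
  apply: h0; rewrite ltrBlDr ltrDl invr_gt0; exact: ltr0Sn.
by rewrite leNgt hq.
Qed.

Lemma prior_data (R : realType) (n : nat) (Cfam : 'I_n -> probability R R)
  (hprior : forall k, prior_on_01 (Cfam k))
  (hnd : forall (K : nat) (p : 'I_K -> probability R R),
           (forall i, exists k, p i = Cfam k) -> pairwise_nondominance p)
  (k : 'I_n) :
  exists r t : R, r < t /\ (0 < Cfam k `[t, +oo[%classic)%E /\
    forall k', (0 < Cfam k' `]-oo, r]%classic)%E.
Proof.
have hmk1 : (prior_mean (Cfam k) <= 1%:E)%E.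
  apply: (@mean_le R (Cfam k) `[0%R, 1%R]%classic 1).
  - by [].
  - exact: hprior.
  - by move=> x /=; rewrite in_itv.
have hk' : forall k', (0 < Cfam k' [set x | (x%:E < prior_mean (Cfam k))%E])%E.
  move=> k'.
  pose p := fun l : 'I_2 => if l == ord0 then Cfam k else Cfam k'.
  have hp : forall i, exists k0, p i = Cfam k0.
    by move=> i; rewrite /p; case: ifP => _; [exists k | exists k'].
  have := hnd 2 p hp ord0 ord_max isT.
  by rewrite /p /=.
case E: (prior_mean (Cfam k)) => [m| |]; last 2 first.
- by move: hmk1; rewrite E.
- have := hk' k; rewrite E.
  rewrite (_ : [set x | _] = set0) ?measure0 ?ltxx //.
  by apply/seteqP; split => x //=; rewrite ltNge leNye.
have hk2 : forall k', (0 < Cfam k' `]-oo, m[%classic)%E.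
  move=> k'; have := hk' k'; rewrite E.
  by rewrite (_ : [set x | _] = `]-oo, m[%classic) //; apply/seteqP; split => x /=; rewrite in_itv /= lte_fin.
have [f hf] := choice (fun k' => @exists_r R (Cfam k') m (hk2 k')).
pose r := \big[Num.max/(m-1)]_(k' < n) f k'.
have hrm : r < m.
  rewrite /r; elim/big_ind: _.
  - by rewrite ltrBlDr ltrDl ltr01.
  - by move=> x y hx hy; rewrite gt_max hx hy.
  - by move=> i _; exact: (hf i).1.
have hfr : forall k', f k' <= r.
  by move=> k'; rewrite /r; apply: le_bigmax.
pose t := (r + m) / 2.
have [hrt htm] := midf_lt hrm.
exists r, t; split => //; split; last first.
  move=> k'; apply: (lt_le_trans (hf k').2); apply: le_measure; rewrite ?inE //.
  by move=> x /=; rewrite !in_itv /= => h; exact: le_trans h (hfr k').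
rewrite lt0e measure_ge0 andbT; apply/eqP => h0.
have h01 : (Cfam k : {content set R -> \bar R}) `[0%R, 1%R]%classic = 1%E := hprior k.
have : (prior_mean (Cfam k) <= t%:E)%E.
  apply: (@mean_le R (Cfam k) (`[0%R,1%R] `\` `[t,+oo[)%classic t).
  - by apply: measurableD.
  - rewrite measureD //; last by rewrite h01 ltry.
    have -> : (Cfam k : {content set R -> \bar R}) (`[0%R, 1%R] `&` `[t, +oo[)%classic = 0%E.
      apply/eqP; rewrite eq_le measure_ge0 andbT.
      apply: (le_trans (measureIr _ _ _)) => //; rewrite le_eqVlt; apply/orP; left; apply/eqP; exact: h0.
    by rewrite h01 sube0.
  - move=> x [] /=; rewrite !in_itv /= andbT => /andP[h1 h2] /negP; rewrite -ltNge => xt.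
    by rewrite h1 ltW.
rewrite E lee_fin => mt.
by move: htm; rewrite ltNge mt.
Qed.

Lemma prod_ge (R : realType) (K : nat) (F : 'I_K -> \bar R) (c : R) :
  0 <= c -> (forall l, (c%:E <= F l)%E) -> ((c ^+ K)%:E <= \prod_(l < K) F l)%E.
Proof.
move=> c0 hF.
have -> : c ^+ K = \prod_(l < K) c by rewrite prodr_const card_ord.
suff [] : 0 <= \prod_(l < K) c /\ ((\prod_(l < K) c)%:E <= \prod_(l < K) F l)%E by [].
apply: (big_ind2 (fun a b => 0 <= a /\ (a%:E <= b)%E)) => //.
move=> x1 x2 y1 y2 [hx1 hx] [hy1 hy]; split; first exact: mulr_ge0.
rewrite EFinM; apply: lee_pmul => //.
Qed.

Lemma fin_prob d (T : measurableType d) (R : realType) (P : probability T R) (A : set T) :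
  measurable A -> P A = (fine (P A))%:E.
Proof.
move=> mA; apply/esym/fineK; rewrite ge0_fin_numE ?measure_ge0 //.
exact: le_lt_trans (probability_le1 _ mA) (ltry 1).
Qed.

Arguments fin_prob {d T R} P {A}.

Lemma evt_meas d (T : measurableType d) (R : realType) (K : nat)
  (mu : 'I_K -> T -> R) (A : 'I_K -> set R) :
  (forall i, measurable_fun setT (mu i)) -> (forall l, measurable (A l)) ->
  measurable [set s | forall l, A l (mu l s)].
Proof.
move=> hm mA.
have -> : [set s | forall l, A l (mu l s)] = \bigcap_(l in [set: 'I_K]) (mu l @^-1` A l).
  apply/seteqP; split => s /= h l; first by move=> _; apply: h.
  by apply: h.
apply: fin_bigcap_measurable; first exact: finite_finset.
by move=> l _; rewrite -[X in measurable X]setTI; apply: hm.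
Qed.

Lemma astar_meas d (T : measurableType d) (R : realType) (K : nat)
  (mu : 'I_K -> T -> R) (i : 'I_K) :
  (forall i, measurable_fun setT (mu i)) ->
  measurable [set s | is_Astar (fun j => mu j s) i].
Proof.
move=> hm.
have -> : [set s | is_Astar (fun j => mu j s) i] = \bigcap_(j in [set: 'I_K])
   ([set s | mu j s <= mu i s] `&` [set s | (j < i)%N -> mu j s < mu i s]).
  apply/seteqP; split => s /=.
  - by move=> [h1 h2] j _; split; [apply: h1 | apply: h2].
  - by move=> h; split => j; [case: (h j I) | case: (h j I) => _; apply].
apply: fin_bigcap_measurable; first exact: finite_finset.
move=> j _; apply: measurableI.
  rewrite -[X in measurable X]setTI; exact: measurable_fun_le.
have [ji|ji] := boolP (j < i)%N.
  rewrite (_ : [set s | _] = ~` [set s | mu i s <= mu j s]); last first.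
    by apply/seteqP; split => s /=; [move=> /(_ isT); rewrite ltNge => /negP | move=> h _; rewrite ltNge; apply/negP].
  apply: measurableC; rewrite -[X in measurable X]setTI; exact: measurable_fun_le.
rewrite (_ : [set s | _] = setT) //.
by apply/seteqP; split => s.
Qed.

Lemma fine_between (R : realType) (x : \bar R) (a b : R) :
  (a%:E <= x)%E -> (x <= b%:E)%E -> a <= fine x /\ fine x <= b.
Proof. by case: x => [x| |] //=; rewrite !lee_fin => h1 h2. Qed.

Theorem corollary3p3 (R : realType) (C_TS : R) (hC : 0 < C_TS)
  (n : nat) (Cfam : 'I_n -> probability R R)
  (hprior : forall k, prior_on_01 (Cfam k))
  (hnd : forall (K : nat) (p : 'I_K -> probability R R),
           (forall i, exists k, p i = Cfam k) -> pairwise_nondominance p) :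
  exists c : R, forall (K : nat), (2 <= K)%N ->
    forall (d : measure_display) (T : measurableType d) (P : probability T R)
           (mu : 'I_K -> T -> R),
      (forall i, measurable_fun setT (mu i)) ->
      mutually_independent P mu ->
      (forall i, exists k, has_law P (mu i) (Cfam k)) ->
      0 < eps_TS P mu /\ 0 < delta_TS P mu /\
      N_TS C_TS P mu <= c * K%:R.
Proof.
have H : forall k, exists p : R * R, p.1 < p.2 /\
    (0 < Cfam k `[p.2, +oo[%classic)%E /\
    forall k', (0 < Cfam k' `]-oo, p.1]%classic)%E.
  move=> k; have [r [t [h1 [h2 h3]]]] := @prior_data R n Cfam hprior hnd k.
  by exists (r, t).
have [rt hrt] := choice H.
pose r k := (rt k).1.
pose t k := (rt k).2.
pose g := \big[Num.min/1]_(k < n) (t k - r k).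
have g0 : 0 < g.
  rewrite /g; apply: (big_ind (fun x => 0 < x)) => //; first by move=> x y hx hy; rewrite lt_min hx hy.
  by move=> k _; rewrite subr_gt0; exact: (hrt k).1.
have hg : forall k, g <= t k - r k by move=> k; exact: bigmin_le.
pose a k := fine (Cfam k `[t k, +oo[%classic).
pose b k k' := fine (Cfam k' `]-oo, r k]%classic).
have a0 : forall k, 0 < a k.
  move=> k; apply: fine_gt0; rewrite (hrt k).2.1 /=.
  exact: le_lt_trans (probability_le1 _ (measurable_itv _)) (ltry 1).
have b0 : forall k k', 0 < b k k'.
  move=> k k'; apply: fine_gt0; rewrite ((hrt k).2.2 k') /=.
  exact: le_lt_trans (probability_le1 _ (measurable_itv _)) (ltry 1).
pose gam := \big[Num.min/1]_(k < n) Num.min (a k) (\big[Num.min/1]_(k' < n) b k k').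
have gam0 : 0 < gam.
  rewrite /gam; apply: (big_ind (fun x => 0 < x)) => //; first by move=> x y hx hy; rewrite lt_min hx hy.
  move=> k _; rewrite lt_min a0 /=; apply: (big_ind (fun x => 0 < x)) => //; first by move=> x y hx hy; rewrite lt_min hx hy.
have gam1 : gam <= 1 by exact: bigmin_le_id.
have gama : forall k, (gam%:E <= Cfam k `[t k, +oo[%classic)%E.
  move=> k; rewrite (fin_prob _ (measurable_itv _)) lee_fin.
  rewrite /gam; apply: (le_trans (bigmin_le _ k _)); by rewrite ge_min lexx.
have gamb : forall k k', (gam%:E <= Cfam k' `]-oo, r k]%classic)%E.
  move=> k k'; rewrite (fin_prob _ (measurable_itv _)) lee_fin.
  rewrite /gam; apply: (le_trans (bigmin_le _ k _)); rewrite ge_min; apply/orP; right.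
  exact: bigmin_le.
pose e0 := g * gam ^+ 2.
have e00 : 0 < e0 by rewrite mulr_gt0 // exprn_gt0.
exists (C_TS * e0 ^- 2 * ln (gam^-1)).
move=> K K2 d T P mu hm hind hlaw.
have [kk hkk] := choice hlaw.
have hE : forall A : 'I_K -> set R, (forall l, measurable (A l)) ->
    P [set s | forall l, A l (mu l s)] = (\prod_(l < K) Cfam (kk l) (A l))%E.
  move=> A mA; rewrite hind //; apply: eq_bigr => l _; exact: hkk l (A l) (mA l).
have mf : forall i j, measurable_fun setT (fun s => (Num.max (mu i s - mu j s) 0)%:E).
  move=> i j; apply/measurable_EFinP.
  apply: (@measurable_maxr _ _ _ _ (mu i \- mu j) (cst 0)).
    exact: measurable_funB.
  exact: measurable_cst.
have f0 : forall i j s, (0 <= (Num.max (mu i s - mu j s) 0)%:E)%E.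
  by move=> i j s; rewrite lee_fin le_max lexx orbT.
have Feps : forall i j, i != j ->
    (e0%:E <= \int[P]_s ((Num.max (mu i s - mu j s) 0)%:E))%E.
  move=> i j ij.
  pose k := kk i.
  pose A := fun l : 'I_K => if l == i then `[t k, +oo[%classic
    else if l == j then `]-oo, r k]%classic else setT.
  have mA : forall l, measurable (A l).
    by move=> l; rewrite /A; case: ifP => _ //; case: ifP.
  pose E := [set s | forall l, A l (mu l s)].
  have mE : measurable E by exact: evt_meas.
  have PE : ((gam ^+ 2)%:E <= P E)%E.
    rewrite /E hE // (bigD1 i) //= (bigD1 j) /=; last by rewrite eq_sym.
    rewrite big1 ?mule1; last first.
      move=> l /andP[li lj]; rewrite /A (negbTE li) (negbTE lj).
      exact: probability_setT.
    rewrite /A eqxx (negbTE (_ : j != i)) ?eqxx; last by rewrite eq_sym.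
    rewrite expr2 EFinM; apply: lee_pmul => //; try by rewrite lee_fin ltW.
    all: try exact: gama.
    all: try exact: gamb.
  apply: (@le_trans _ _ (\int[P]_(s in E) (Num.max (mu i s - mu j s) 0)%:E)%E); last first.
    apply: ge0_subset_integral => //.
  apply: (@le_trans _ _ (\int[P]_(s in E) (cst g%:E s))%E); last first.
    apply: ge0_le_integral => //.
    - by move=> s _; rewrite lee_fin ltW.
    - exact: measurable_funTS.
    move=> s Es /=; rewrite lee_fin le_max; apply/orP; left.
    have hi := Es i; have hj := Es j.
    rewrite /A eqxx /= in_itv /= andbT in hi.
    rewrite /A (negbTE (_ : j != i)) ?eqxx /= ?in_itv /= in hj; last by rewrite eq_sym.
    apply: le_trans (hg k) _; exact: lerB.
  rewrite integral_cst // /e0 EFinM; apply: lee_pmul => //; try by rewrite lee_fin ltW.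
  by rewrite lee_fin exprn_ge0 // ltW.
have Ffin : forall i j, (\int[P]_s ((Num.max (mu i s - mu j s) 0)%:E) <= 1)%E.
  move=> i j.
  have mB : forall l, measurable (mu l @^-1` (~` `[0%R, 1%R]%classic)).
    move=> l; rewrite -[X in measurable X]setTI; apply: hm => //.
    exact: measurableC.
  have P0 : forall l, P (mu l @^-1` (~` `[0%R, 1%R]%classic)) = 0%E.
    move=> l; rewrite (hkk l _ (measurableC (measurable_itv _))).
    have h01 : Cfam (kk l) `[0%R, 1%R]%classic = 1%E := hprior _.
    by rewrite probability_setC // h01 subee.
  pose N := mu i @^-1` (~` `[0%R, 1%R]%classic) `|` mu j @^-1` (~` `[0%R, 1%R]%classic).
  have mN : measurable N by apply: measurableU.
  have PN : P N = 0%E.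
    apply/eqP; rewrite eq_le measure_ge0 andbT.
    apply: (le_trans (measureU2 _ _ _)) => //.
    have := P0 i; have := P0 j; rewrite /= => -> ->; by rewrite adde0.
  apply: (@le_trans _ _ (\int[P]_s (cst 1%E s))%E).
    apply: ae_ge0_le_integral => //.
    exists N; split => //.
    move=> s /= hs; apply: contrapT => hNs; apply: hs => _.
    have hi : 0 <= mu i s <= 1.
      by apply: contrapT => h; apply: hNs; left => /= hin; apply: h; rewrite in_itv /= in hin.
    have hj : 0 <= mu j s <= 1.
      by apply: contrapT => h; apply: hNs; right => /= hin; apply: h; rewrite in_itv /= in hin.
    rewrite lee_fin ge_max ler01 andbT.
    move: hi hj => /andP[? ?] /andP[? ?]; lra.
  rewrite integral_cst // mul1e; exact: probability_le1.
have Fdel : forall i, ((gam ^+ K)%:E <= P [set s | is_Astar (fun j => mu j s) i])%E.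
  move=> i.
  pose k := kk i.
  pose A := fun l : 'I_K => if l == i then `[t k, +oo[%classic else `]-oo, r k]%classic.
  have mA : forall l, measurable (A l) by move=> l; rewrite /A; case: ifP.
  have sub : [set s | forall l, A l (mu l s)] `<=` [set s | is_Astar (fun j => mu j s) i].
    move=> s /= h.
    have hi := h i; rewrite /A eqxx /= in_itv /= andbT in hi.
    have hj : forall j, j != i -> mu j s < mu i s.
      move=> j ji; have := h j; rewrite /A (negbTE ji) /= in_itv /= => hj'.
      exact: le_lt_trans hj' (lt_le_trans (hrt k).1 hi).
    split => j.
      by case: (eqVneq j i) => [->//|ji]; exact/ltW/hj.
    by move=> ji; apply: hj; rewrite neq_ltn ji.
  have PE : ((gam ^+ K)%:E <= P [set s | forall l, A l (mu l s)])%E.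
    rewrite hE //; apply: prod_ge; first exact: ltW.
    by move=> l; rewrite /A; case: ifP => [/eqP ->|_]; [exact: gama | exact: gamb].
  apply: (le_trans PE); apply: le_measure; rewrite ?inE //.
  - exact: evt_meas.
  - exact: astar_meas.
have K0 : (0 < K)%N by apply: ltnW.
pose i0 := Ordinal K0.
pose i1 := @Ordinal K 1 K2.
have [eps_lo eps_hi] : e0 <= eps_TS P mu /\ eps_TS P mu <= 1.
  apply: fine_between.
  - elim/big_ind: _ => //; first exact: leey.
    + by move=> x y hx hy; rewrite le_min hx hy.
    move=> i _; elim/big_ind: _ => //; first exact: leey.
    + by move=> x y hx hy; rewrite le_min hx hy.
    by move=> j ji; apply: Feps; rewrite eq_sym.
  - apply: (le_trans (bigmin_le _ i0 _)).
    apply: (le_trans (@bigmin_le_cond _ _ _ _ i1 _ _ _)); last exact: Ffin.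
    by [].
have [del_lo del_hi] : gam ^+ K <= delta_TS P mu /\ delta_TS P mu <= 1.
  apply: fine_between.
  - apply: (big_ind (fun x => ((gam ^+ K)%:E <= x)%E)); first exact: leey.
      by move=> x y hx hy; rewrite le_min hx hy.
    by move=> i _; exact: Fdel.
  - apply: (le_trans (bigmin_le _ i0 _)).
    apply: probability_le1; exact: astar_meas.
have eps0 : 0 < eps_TS P mu by apply: lt_le_trans eps_lo.
have gK0 : 0 < gam ^+ K by rewrite exprn_gt0.
have del0 : 0 < delta_TS P mu by apply: lt_le_trans del_lo.
split => //; split => //.
rewrite /N_TS -!mulrA ler_pM2l //.
have L0 : 0 <= ln ((delta_TS P mu)^-1) by apply: ln_ge0; rewrite invf_ge1.
have L1 : ln ((delta_TS P mu)^-1) <= ln (gam^-1) * K%:R.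
  rewrite mulr_natr -lnXn ?invr_gt0 // exprVn.
  rewrite ler_ln ?posrE ?invr_gt0 ?exprn_gt0 // lef_pV2 ?posrE //.
have L2 : (eps_TS P mu) ^- 2 <= e0 ^- 2.
  rewrite lef_pV2 ?posrE ?exprn_gt0 //.
  by apply: lerXn2r => //; rewrite nnegrE ltW.
apply: ler_pM => //.
by rewrite invr_ge0 exprn_ge0 // ltW.
Qed.
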